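(* Let $M\in\mathbb{N}$ be divisible neither by $2^4$ nor by the square of any odd prime, let $k$ be a positive integer, and suppose $d=\dim S_k^{\rm new}(\Gamma_0(M))\ge2$. Let $\varphi_1,\ldots,\varphi_d$ be the normalized newforms forming a basis of $S_k^{\rm new}(\Gamma_0(M))$, with Fourier coefficients $a_i(n)$, and for primes $p\nmid M$ define $\theta_i(p)\in[0,\tfrac12]$ by $a_i(p)=2p^{\frac{k-1}{2}}\cos(2\pi\theta_i(p))$. Let $p\nmid M$ be a prime such that for every pair of indices $i\ne j$ the numbers $1,\theta_i(p),\theta_j(p)$ are linearly independent over $\mathbb{Q}$. Then for any index $i_1\in\{1,\ldots,d\}$ there exist distinct non-zero integers $n_1,\ldots,n_d$ such that (1) $n_{i_1}\nmid n_i$ for all $i\ne i_1$; (2) for every $t\in\mathbb{R}$ and every $\varepsilon>0$ there exists $n\in\mathbb{N}$ such that $\min\{|n\theta_i(p)-n_it-m|:m\in\mathbb{Z}\}<\varepsilon$ for all $i=1,\ldots,d$.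
   Context: $S_k^{\rm new}(\Gamma_0(M))$ is the new subspace of weight-$k$ holomorphic cusp forms for $\Gamma_0(M)$ with trivial character; normalized newforms have real coefficients with $|a_i(p)|\le 2p^{(k-1)/2}$. The assumption $d\ge 2$ is a standing assumption of the section of the paper containing this lemma. *)

(* Defs.v *)
From Stdlib Require Export Reals Lra ZArith QArith Qreals Znumtheory.
Open Scope R_scope.

Definition nat_prime (q : nat) : Prop := prime (Z.of_nat q).

Definition level_ok (M : nat) : Prop :=
  (0 < M)%nat /\ ~ Nat.divide 16 M /\
  (forall q : nat, nat_prime q -> q <> 2%nat -> ~ Nat.divide (q * q) M).

Definition Q_lin_indep3 (x y z : R) : Prop :=
  forall q0 q1 q2 : Q, Q2R q0 * x + Q2R q1 * y + Q2R q2 * z = 0 ->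
    (q0 == 0)%Q /\ (q1 == 0)%Q /\ (q2 == 0)%Q.

Definition satake_angles (M k d : nat) (a : nat -> nat -> R) (theta : nat -> nat -> R) : Prop :=
  forall i q : nat, (i < d)%nat -> nat_prime q -> ~ Nat.divide q M ->
    0 <= theta i q <= 1/2 /\
    a i q = 2 * Rpower (INR q) ((INR k - 1) / 2) * cos (2 * PI * theta i q).

(* Main.v *)
Require Import Defs.
From Stdlib Require Import Reals ZArith QArith Qreals.
From Stdlib Require Import Lia Lra Classical.
Open Scope R_scope.

Fixpoint dotR (d : nat) (h : nat -> Z) (x : nat -> R) : R :=
  match d with O => 0 | S d' => dotR d' h x + IZR (h d') * x d' end.
Fixpoint dotZ (d : nat) (h n : nat -> Z) : Z :=
  match d with O => 0%Z | S d' => (dotZ d' h n + h d' * n d')%Z end.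
Definition isRatR (x : R) : Prop := exists q : Q, x = Q2R q.

Lemma isRat_plus x y : isRatR x -> isRatR y -> isRatR (x + y).
Proof. intros [a ->] [b ->]. exists (a + b)%Q. now rewrite Q2R_plus. Qed.
Lemma isRat_mult x y : isRatR x -> isRatR y -> isRatR (x * y).
Proof. intros [a ->] [b ->]. exists (a * b)%Q. now rewrite Q2R_mult. Qed.
Lemma isRat_0 : isRatR 0.
Proof. exists 0%Q. unfold Q2R. simpl. lra. Qed.

Fixpoint sumF (N : nat) (f : nat -> R) : R :=
  match N with O => 0 | S N' => sumF N' f + f N' end.

Lemma sumF_plus N f g : sumF N (fun j => f j + g j) = sumF N f + sumF N g.
Proof. induction N; simpl; [lra | rewrite IHN; lra]. Qed.
Lemma sumF_const N a : sumF N (fun _ => a) = INR N * a.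
Proof. induction N; simpl sumF; [simpl; lra | rewrite IHN, S_INR; lra]. Qed.
Lemma sumF_ext N f g : (forall j, (j < N)%nat -> f j = g j) -> sumF N f = sumF N g.
Proof. induction N; intros H; simpl; auto. rewrite IHN by (intros; apply H; lia). rewrite H by lia. auto. Qed.
Lemma sumF_le N f g : (forall j, (j < N)%nat -> f j <= g j) -> sumF N f <= sumF N g.
Proof. induction N; intros H; simpl; [lra|]. assert (sumF N f <= sumF N g) by (apply IHN; intros; apply H; lia). assert (f N <= g N) by (apply H; lia). lra. Qed.
Lemma sumF_scal N a f : sumF N (fun j => a * f j) = a * sumF N f.
Proof. induction N; simpl; [lra | rewrite IHN; lra]. Qed.
Lemma sumF_ge_first N f : (forall j, 0 <= f j) -> f O <= sumF (S N) f.
Proof. induction N; intros H; simpl in *. lra. specialize (IHN H). specialize (H (S N)). lra. Qed.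

Lemma telesc N g p :
  2 * sin (g / 2) * sumF N (fun j => cos (INR j * g + p)) =
  sin ((INR N - 1/2) * g + p) - sin (p - g / 2).
Proof.
induction N.
- simpl. replace ((0 - 1/2) * g + p) with (p - g/2) by lra. lra.
- simpl sumF. rewrite Rmult_plus_distr_l, IHN, S_INR.
  replace ((INR N + 1 - 1/2) * g + p) with ((INR N * g + p) + g/2) by lra.
  replace ((INR N - 1/2) * g + p) with ((INR N * g + p) - g/2) by lra.
  rewrite sin_plus, sin_minus. ring.
Qed.

Lemma sumcos_bound N g p : sin (g/2) <> 0 ->
  Rabs (sumF N (fun j => cos (INR j * g + p))) <= 1 / Rabs (sin (g/2)).
Proof.
intros Hs. set (S := sumF N _).
assert (E := telesc N g p). fold S in E.
assert (Ha : 0 < Rabs (sin (g/2))) by (apply Rabs_pos_lt; auto).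
assert (Rabs (2 * sin (g/2) * S) <= 2).
{ rewrite E. pose proof (SIN_bound ((INR N - 1/2) * g + p)). pose proof (SIN_bound (p - g/2)).
  apply Rabs_le. lra. }
rewrite !Rabs_mult in H. rewrite Rabs_right in H by lra.
apply (Rmult_le_reg_l (Rabs (sin (g/2)))); auto.
field_simplify; lra.
Qed.

Lemma IZR_pos_INR p : IZR (Z.pos p) = INR (Pos.to_nat p).
Proof. rewrite INR_IZR_INZ, positive_nat_Z. reflexivity. Qed.

Lemma cos_2PI_Z x k : cos (x + 2 * PI * IZR k) = cos x.
Proof.
destruct k as [|p|p].
- rewrite Rmult_0_r, Rplus_0_r. reflexivity.
- rewrite (IZR_pos_INR p). replace (x + 2 * PI * INR (Pos.to_nat p)) with (x + 2 * INR (Pos.to_nat p) * PI) by ring. apply cos_period.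
- rewrite <- Pos2Z.opp_pos, opp_IZR, (IZR_pos_INR p).
  rewrite <- (cos_period (x + 2 * PI * - INR (Pos.to_nat p)) (Pos.to_nat p)). f_equal. ring.
Qed.

Lemma sin_2PI_Z x k : sin (x + 2 * PI * IZR k) = sin x.
Proof.
destruct k as [|p|p].
- rewrite Rmult_0_r, Rplus_0_r. reflexivity.
- rewrite (IZR_pos_INR p). replace (x + 2 * PI * INR (Pos.to_nat p)) with (x + 2 * INR (Pos.to_nat p) * PI) by ring. apply sin_period.
- rewrite <- Pos2Z.opp_pos, opp_IZR, (IZR_pos_INR p).
  rewrite <- (sin_period (x + 2 * PI * - INR (Pos.to_nat p)) (Pos.to_nat p)). f_equal. ring.
Qed.

Lemma dotR_ext d h g x y : (forall l, (l < d)%nat -> h l = g l) -> (forall l, (l < d)%nat -> x l = y l) ->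
  dotR d h x = dotR d g y.
Proof. induction d; intros H1 H2; simpl; auto. rewrite IHd by (intros; auto). rewrite H1, H2 by lia. auto. Qed.
Lemma dotR_addv d h g x : dotR d (fun l => (h l + g l)%Z) x = dotR d h x + dotR d g x.
Proof. induction d; simpl; [lra | rewrite IHd, plus_IZR; ring]. Qed.
Lemma dotR_subv d h g x : dotR d (fun l => (h l - g l)%Z) x = dotR d h x - dotR d g x.
Proof. induction d; simpl; [lra | rewrite IHd, minus_IZR; ring]. Qed.
Lemma dotR_lin d h x y a b : dotR d h (fun l => a * x l + b * y l) = a * dotR d h x + b * dotR d h y.
Proof. induction d; simpl; [lra | rewrite IHd; ring]. Qed.
Lemma dotR_IZR d h n : dotR d h (fun l => IZR (n l)) = IZR (dotZ d h n).
Proof. induction d; simpl; auto. rewrite IHd, plus_IZR, mult_IZR. ring. Qed.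
Lemma dotR_single d i a x : dotR d (fun l => if Nat.eqb l i then a else 0%Z) x = if Nat.ltb i d then IZR a * x i else 0.
Proof.
induction d; simpl; auto. rewrite IHd.
destruct (Nat.eqb d i) eqn:E.
- apply Nat.eqb_eq in E. subst. rewrite (proj2 (Nat.ltb_ge i i)) by lia. rewrite (proj2 (Nat.ltb_lt i (S i))) by lia. ring.
- apply Nat.eqb_neq in E. destruct (Nat.ltb i d) eqn:E2.
  + apply Nat.ltb_lt in E2. rewrite (proj2 (Nat.ltb_lt i (S d))) by lia. ring.
  + apply Nat.ltb_ge in E2. rewrite (proj2 (Nat.ltb_ge i (S d))) by lia. ring.
Qed.
Lemma dotR_zero_h d h x : (forall l, (l < d)%nat -> h l = 0%Z) -> dotR d h x = 0.
Proof. induction d; intros H; simpl; auto. rewrite IHd by (intros; apply H; lia). rewrite H by lia. simpl. ring. Qed.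

Fixpoint iszero (d : nat) (h : nat -> Z) : bool :=
  match d with O => true | S d' => iszero d' h && Z.eqb (h d') 0 end.
Lemma iszero_spec d h : iszero d h = true <-> forall l, (l < d)%nat -> h l = 0%Z.
Proof.
induction d; simpl; split; intros H.
- intros; lia.
- auto.
- apply andb_true_iff in H as [H1 H2]. apply Z.eqb_eq in H2. intros l Hl.
  destruct (Nat.eq_dec l d); [subst; auto | apply IHd; auto; lia].
- apply andb_true_iff; split; [apply IHd; intros; apply H; lia | apply Z.eqb_eq, H; lia].
Qed.

From Stdlib Require Import List.
Local Open Scope list_scope.
Definition term := (R * (nat -> Z))%type.
Definition evT (d : nat) (u : nat -> R) (t : term) : R := fst t * cos (2 * PI * dotR d (snd t) u).
Fixpoint evP (d : nat) (u : nat -> R) (P : list term) : R :=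
  match P with nil => 0 | t :: P' => evT d u t + evP d u P' end.
Fixpoint C0 (d : nat) (P : list term) : R :=
  match P with nil => 0 | t :: P' => (if iszero d (snd t) then fst t else 0) + C0 d P' end.
Definition nonneg (P : list term) := Forall (fun t : term => 0 <= fst t) P.

Definition mulT (t s : term) : list term :=
  (fst t * fst s / 2, fun l => (snd t l + snd s l)%Z) ::
  (fst t * fst s / 2, fun l => (snd t l - snd s l)%Z) :: nil.
Definition mulP (P Q : list term) : list term := flat_map (fun t => flat_map (mulT t) Q) P.

Lemma evP_app d u P Q : evP d u (P ++ Q) = evP d u P + evP d u Q.
Proof. induction P; simpl; [lra | rewrite IHP; lra]. Qed.
Lemma C0_app d P Q : C0 d (P ++ Q) = C0 d P + C0 d Q.
Proof. induction P; simpl; [lra | rewrite IHP; lra]. Qed.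
Lemma nonneg_app P Q : nonneg P -> nonneg Q -> nonneg (P ++ Q).
Proof. unfold nonneg; intros; apply Forall_app; auto. Qed.

Lemma evP_mulT d u t s : evP d u (mulT t s) = evT d u t * evT d u s.
Proof.
unfold mulT; simpl; unfold evT; simpl. rewrite dotR_addv, dotR_subv.
set (A := 2 * PI * dotR d (snd t) u). set (B := 2 * PI * dotR d (snd s) u).
replace (2 * PI * (dotR d (snd t) u + dotR d (snd s) u)) with (A + B) by (unfold A, B; ring).
replace (2 * PI * (dotR d (snd t) u - dotR d (snd s) u)) with (A - B) by (unfold A, B; ring).
rewrite cos_plus, cos_minus. field.
Qed.

Lemma evP_flat d u t Q : evP d u (flat_map (mulT t) Q) = evT d u t * evP d u Q.
Proof.
induction Q as [|s Q IH]; [simpl; ring|].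
change (flat_map (mulT t) (s :: Q)) with (mulT t s ++ flat_map (mulT t) Q).
rewrite evP_app, evP_mulT, IH. cbn [evP]. ring.
Qed.
Lemma evP_mul d u P Q : evP d u (mulP P Q) = evP d u P * evP d u Q.
Proof.
induction P as [|t P IH]; [simpl; ring|]. unfold mulP in *.
change (flat_map (fun t0 => flat_map (mulT t0) Q) (t :: P)) with (flat_map (mulT t) Q ++ flat_map (fun t0 => flat_map (mulT t0) Q) P).
rewrite evP_app, evP_flat, IH. cbn [evP]. ring.
Qed.

Lemma nonneg_mul P Q : nonneg P -> nonneg Q -> nonneg (mulP P Q).
Proof.
intros HP HQ. induction HP as [|t P Ht HP IH]; [constructor|].
change (mulP (t::P) Q) with (flat_map (mulT t) Q ++ mulP P Q).
apply nonneg_app; auto. clear IH HP. induction HQ as [|s Q Hs HQ IHQ]; [constructor|].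
change (flat_map (mulT t) (s::Q)) with (mulT t s ++ flat_map (mulT t) Q).
apply nonneg_app; auto. unfold mulT, nonneg.
assert (0 <= fst t * fst s / 2) by (apply Rmult_le_pos; [apply Rmult_le_pos|]; lra).
constructor; [exact H|constructor; [exact H|constructor]].
Qed.

Lemma C0_nonneg d P : nonneg P -> 0 <= C0 d P.
Proof. intros H; induction H; simpl; [lra|]. destruct (iszero d (snd x)); lra. Qed.

Definition zind (d : nat) (t : term) : R := if iszero d (snd t) then fst t else 0.

Lemma C0_mulT d t s : 0 <= fst t -> 0 <= fst s -> zind d t * zind d s <= C0 d (mulT t s).
Proof.
intros Ht Hs. unfold zind, mulT, C0; simpl.
destruct (iszero d (snd t)) eqn:E1; destruct (iszero d (snd s)) eqn:E2.
- rewrite (proj2 (iszero_spec d (fun l => (snd t l + snd s l)%Z))).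
  2:{ intros l Hl. rewrite (proj1 (iszero_spec _ _) E1 l Hl), (proj1 (iszero_spec _ _) E2 l Hl). lia. }
  rewrite (proj2 (iszero_spec d (fun l => (snd t l - snd s l)%Z))).
  2:{ intros l Hl. rewrite (proj1 (iszero_spec _ _) E1 l Hl), (proj1 (iszero_spec _ _) E2 l Hl). lia. }
  lra.
- assert (0 <= fst t * fst s / 2) by (apply Rmult_le_pos; [apply Rmult_le_pos|]; lra).
  repeat match goal with |- context [if ?b then _ else _] => destruct b end; nra.
- assert (0 <= fst t * fst s / 2) by (apply Rmult_le_pos; [apply Rmult_le_pos|]; lra).
  repeat match goal with |- context [if ?b then _ else _] => destruct b end; nra.
- assert (0 <= fst t * fst s / 2) by (apply Rmult_le_pos; [apply Rmult_le_pos|]; lra).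
  repeat match goal with |- context [if ?b then _ else _] => destruct b end; nra.
Qed.

Lemma C0_flat d t Q : 0 <= fst t -> nonneg Q -> zind d t * C0 d Q <= C0 d (flat_map (mulT t) Q).
Proof.
intros Ht HQ; induction HQ as [|s Q Hs HQ IHQ].
- simpl. lra.
- change (flat_map (mulT t) (s::Q)) with (mulT t s ++ flat_map (mulT t) Q).
  rewrite C0_app. pose proof (C0_mulT d t s Ht Hs). unfold zind in *. cbn [C0].
  destruct (iszero d (snd s)); destruct (iszero d (snd t)); lra.
Qed.

Lemma C0_mul d P Q : nonneg P -> nonneg Q -> C0 d P * C0 d Q <= C0 d (mulP P Q).
Proof.
intros HP HQ; induction HP as [|t P Ht HP IH].
- simpl. lra.
- change (mulP (t::P) Q) with (flat_map (mulT t) Q ++ mulP P Q).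
  rewrite C0_app. pose proof (C0_flat d t Q Ht HQ). unfold zind in *. cbn [C0].
  destruct (iszero d (snd t)); lra.
Qed.

Lemma sumF_evP N d x P :
  sumF N (fun j => evP d (x j) P) = fold_right (fun t acc => sumF N (fun j => evT d (x j) t) + acc) 0 P.
Proof.
induction P; simpl.
- rewrite sumF_const. ring.
- rewrite sumF_plus, IHP. auto.
Qed.

Definition zv : nat -> Z := fun _ => 0%Z.
Definition ev (i : nat) : nat -> Z := fun l => if Nat.eqb l i then 1%Z else 0%Z.
Definition one : list term := (1, zv) :: nil.
Definition gtm (i : nat) : list term := (1/2, zv) :: (1/2, ev i) :: nil.
Fixpoint gpow (i M : nat) : list term :=
  match M with O => one | S M' => mulP (gtm i) (gpow i M') end.
Fixpoint kern (M k : nat) : list term :=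
  match k with O => one | S k' => mulP (gpow k' M) (kern M k') end.
Definition gf (v : R) : R := (1 + cos (2 * PI * v)) / 2.
Fixpoint prodK (M k : nat) (u : nat -> R) : R :=
  match k with O => 1 | S k' => gf (u k') ^ M * prodK M k' u end.

Lemma dotR_zv d x : dotR d zv x = 0.
Proof. apply dotR_zero_h. reflexivity. Qed.
Lemma dotR_ev d i x : (i < d)%nat -> dotR d (ev i) x = x i.
Proof. intros H. unfold ev. rewrite dotR_single. rewrite (proj2 (Nat.ltb_lt i d)) by lia. ring. Qed.

Lemma ev_one d u : evP d u one = 1.
Proof. unfold one; cbn [evP]; unfold evT; cbn [fst snd]. rewrite dotR_zv, Rmult_0_r, cos_0. ring. Qed.
Lemma ev_gtm d u i : (i < d)%nat -> evP d u (gtm i) = gf (u i).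
Proof. intros H. unfold gtm, gf; cbn [evP]; unfold evT; cbn [fst snd]. rewrite dotR_zv, dotR_ev, Rmult_0_r, cos_0 by auto. field. Qed.
Lemma ev_gpow d u i M : (i < d)%nat -> evP d u (gpow i M) = gf (u i) ^ M.
Proof. intros H. induction M; cbn [gpow pow]; [apply ev_one|]. rewrite evP_mul, ev_gtm, IHM by auto. ring. Qed.
Lemma ev_kern d u M k : (k <= d)%nat -> evP d u (kern M k) = prodK M k u.
Proof. intros H. induction k; cbn [kern prodK]; [apply ev_one|]. rewrite evP_mul, ev_gpow, IHk by lia. ring. Qed.

Lemma nonneg_one : nonneg one.
Proof. unfold one, nonneg. constructor; [simpl; lra| constructor]. Qed.
Lemma nonneg_gpow i M : nonneg (gpow i M).
Proof. induction M; cbn [gpow]; [apply nonneg_one|]. apply nonneg_mul; auto.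
  unfold gtm, nonneg. constructor; [simpl; lra| constructor; [simpl; lra|constructor]]. Qed.
Lemma nonneg_kern M k : nonneg (kern M k).
Proof. induction k; cbn [kern]; [apply nonneg_one|]. apply nonneg_mul; auto. apply nonneg_gpow. Qed.

Lemma gf_bounds v : 0 <= gf v <= 1.
Proof. unfold gf. pose proof (COS_bound (2 * PI * v)). lra. Qed.
Lemma prodK_bounds M k u : 0 <= prodK M k u <= 1.
Proof.
induction k; simpl; [lra|]. pose proof (gf_bounds (u k)).
assert (0 <= gf (u k) ^ M) by (apply pow_le; lra).
assert (gf (u k) ^ M <= 1) by (rewrite <- (pow1 M); apply pow_incr; lra).
split; [apply Rmult_le_pos; lra|]. nra.
Qed.
Lemma prodK_far M k u i rho : (i < k)%nat -> 0 <= rho -> gf (u i) <= rho -> prodK M k u <= rho ^ M.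
Proof.
intros Hi Hr Hg. induction k; [lia|]. simpl.
pose proof (prodK_bounds M k u). pose proof (gf_bounds (u k)).
assert (0 <= gf (u k) ^ M) by (apply pow_le; lra).
assert (gf (u k) ^ M <= 1) by (rewrite <- (pow1 M); apply pow_incr; lra).
assert (0 <= rho ^ M) by (apply pow_le; lra).
destruct (Nat.eq_dec i k).
- subst. assert (gf (u k) ^ M <= rho ^ M) by (apply pow_incr; lra). nra.
- assert (prodK M k u <= rho ^ M) by (apply IHk; lia). nra.
Qed.

Definition supp (i M : nat) (t : term) : Prop :=
  (forall l, l <> i -> snd t l = 0%Z) /\ (Z.abs (snd t i) <= Z.of_nat M)%Z.

Lemma supp_mul i a b P Q : Forall (supp i a) P -> Forall (supp i b) Q -> Forall (supp i (a + b)) (mulP P Q).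
Proof.
intros HP HQ. induction HP as [|t P Ht HP IH]; [constructor|].
change (mulP (t::P) Q) with (flat_map (mulT t) Q ++ mulP P Q).
apply Forall_app; split; auto. clear IH HP. induction HQ as [|s Q Hs HQ IHQ]; [constructor|].
change (flat_map (mulT t) (s::Q)) with (mulT t s ++ flat_map (mulT t) Q).
apply Forall_app; split; auto. destruct Ht as [Ht1 Ht2]. destruct Hs as [Hs1 Hs2].
unfold mulT. constructor; [|constructor; [|constructor]]; split; simpl.
- intros l Hl. rewrite Ht1, Hs1 by auto. lia.
- lia.
- intros l Hl. rewrite Ht1, Hs1 by auto. lia.
- lia.
Qed.

Lemma supp_gpow i M : Forall (supp i M) (gpow i M).
Proof.
induction M; cbn [gpow].
- constructor; [|constructor]. split; simpl; [intros; reflexivity| unfold zv; lia].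
- replace (S M) with (1 + M)%nat by lia. apply supp_mul; auto.
  constructor; [|constructor; [|constructor]]; split; simpl.
  + intros; reflexivity.
  + unfold zv; lia.
  + intros l Hl. unfold ev. rewrite (proj2 (Nat.eqb_neq l i)) by auto. reflexivity.
  + unfold ev. rewrite Nat.eqb_refl. lia.
Qed.

Definition pt (i Q r : nat) : nat -> R := fun l => if Nat.eqb l i then INR r / INR Q else 0.

Lemma dot_supp d i M t x : supp i M t -> (i < d)%nat -> dotR d (snd t) x = IZR (snd t i) * x i.
Proof.
intros [H1 H2] Hi.
rewrite (dotR_ext d (snd t) (fun l => if Nat.eqb l i then snd t i else 0%Z) x x).
- rewrite dotR_single, (proj2 (Nat.ltb_lt i d)) by lia. reflexivity.
- intros l Hl. destruct (Nat.eqb l i) eqn:E; [apply Nat.eqb_eq in E; subst; auto | apply Nat.eqb_neq in E; auto].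
- auto.
Qed.

Lemma iszero_supp d i M t : supp i M t -> (i < d)%nat -> iszero d (snd t) = Z.eqb (snd t i) 0.
Proof.
intros [H1 H2] Hi. destruct (Z.eqb (snd t i) 0) eqn:E.
- apply Z.eqb_eq in E. apply iszero_spec. intros l Hl. destruct (Nat.eq_dec l i); [subst; auto | auto].
- apply Z.eqb_neq in E. destruct (iszero d (snd t)) eqn:E2; auto.
  exfalso. apply E. apply (proj1 (iszero_spec _ _) E2). auto.
Qed.

Lemma sin_frac_neq0 k Q : k <> 0%Z -> (Z.abs k < Z.of_nat Q)%Z -> sin (PI * IZR k / INR Q) <> 0.
Proof.
intros Hk HQ.
assert (HQ0 : 0 < INR Q) by (apply lt_0_INR; lia).
assert (Hb : IZR (Z.abs k) < INR Q) by (rewrite INR_IZR_INZ; apply IZR_lt; auto).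
pose proof PI_RGT_0.
destruct (Z_lt_le_dec 0 k) as [Hp|Hn].
- rewrite Z.abs_eq in Hb by lia. apply Rgt_not_eq, Rlt_gt. apply sin_gt_0.
  + apply Rmult_lt_0_compat; [apply Rmult_lt_0_compat; auto; apply IZR_lt; auto | apply Rinv_0_lt_compat; auto].
  + unfold Rdiv. rewrite Rmult_assoc. rewrite <- (Rmult_1_r PI) at 2. apply Rmult_lt_compat_l; auto.
    apply (Rmult_lt_reg_r (INR Q)); auto. rewrite Rmult_assoc, Rinv_l by lra. lra.
- assert (k < 0)%Z by lia. rewrite Z.abs_neq in Hb by lia. rewrite opp_IZR in Hb.
  replace (PI * IZR k / INR Q) with (- (PI * (- IZR k) / INR Q)) by (field; lra).
  rewrite sin_neg. apply Ropp_neq_0_compat. apply Rgt_not_eq, Rlt_gt. apply sin_gt_0.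
  + assert (0 < - IZR k) by (rewrite <- opp_IZR; apply IZR_lt; lia).
    apply Rmult_lt_0_compat; [apply Rmult_lt_0_compat; auto | apply Rinv_0_lt_compat; auto].
  + unfold Rdiv. rewrite Rmult_assoc. rewrite <- (Rmult_1_r PI) at 2. apply Rmult_lt_compat_l; auto.
    apply (Rmult_lt_reg_r (INR Q)); auto. rewrite Rmult_assoc, Rinv_l by lra. lra.
Qed.

Lemma grid_cos k Q : k <> 0%Z -> (Z.abs k < Z.of_nat Q)%Z ->
  sumF Q (fun r => cos (2 * PI * (IZR k * (INR r / INR Q)))) = 0.
Proof.
intros Hk HQ.
assert (HQ0 : 0 < INR Q) by (apply lt_0_INR; lia).
set (g := 2 * PI * IZR k / INR Q).
rewrite (sumF_ext Q _ (fun r => cos (INR r * g + 0))).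
2:{ intros j _. f_equal. unfold g. field. lra. }
assert (Hs : sin (g / 2) <> 0).
{ replace (g / 2) with (PI * IZR k / INR Q) by (unfold g; field; lra). apply sin_frac_neq0; auto. }
pose proof (telesc Q g 0) as E.
replace ((INR Q - 1/2) * g + 0) with (0 - g/2 + 2 * PI * IZR k) in E by (unfold g; field; lra).
rewrite sin_2PI_Z in E. replace (sin (0 - g/2) - sin (0 - g/2)) with 0 in E by ring.
apply Rmult_integral in E. destruct E as [E|E]; auto. lra.
Qed.

Lemma grid_term d i M t : supp i M t -> (i < d)%nat ->
  sumF (S M) (fun r => evT d (pt i (S M) r) t) = INR (S M) * (if iszero d (snd t) then fst t else 0).
Proof.
intros Hs Hi. rewrite (iszero_supp d i M t Hs Hi).
unfold evT. rewrite (sumF_ext (S M) _ (fun r => fst t * cos (2 * PI * (IZR (snd t i) * (INR r / INR (S M)))))).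
2:{ intros j _. rewrite (dot_supp d i M t _ Hs Hi). unfold pt. rewrite Nat.eqb_refl. reflexivity. }
rewrite sumF_scal. destruct (Z.eqb (snd t i) 0) eqn:E.
- apply Z.eqb_eq in E. rewrite E. rewrite (sumF_ext (S M) _ (fun _ => 1)).
  2:{ intros. rewrite Rmult_0_l, Rmult_0_r, cos_0. reflexivity. }
  rewrite sumF_const. ring.
- apply Z.eqb_neq in E. rewrite grid_cos; auto. ring. destruct Hs as [_ H2]. lia.
Qed.

Lemma grid_sum d i M P : Forall (supp i M) P -> (i < d)%nat ->
  sumF (S M) (fun r => evP d (pt i (S M) r) P) = INR (S M) * C0 d P.
Proof.
intros HP Hi. induction HP as [|t P Ht HP IH].
- simpl. rewrite sumF_const. ring.
- cbn [evP C0]. rewrite sumF_plus, IH, grid_term by auto. ring.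
Qed.

Lemma C0_gpow d i M : (i < d)%nat -> / INR (S M) <= C0 d (gpow i M).
Proof.
intros Hi. pose proof (grid_sum d i M _ (supp_gpow i M) Hi) as E.
assert (H1 : 1 <= sumF (S M) (fun r => evP d (pt i (S M) r) (gpow i M))).
{ eapply Rle_trans; [|apply sumF_ge_first].
  - rewrite ev_gpow by auto. unfold pt. rewrite Nat.eqb_refl. unfold gf.
    replace (INR 0 / INR (S M)) with 0 by (change (INR 0) with 0; unfold Rdiv; ring).
    rewrite Rmult_0_r, cos_0. replace ((1 + 1) / 2) with 1 by field. rewrite pow1. lra.
  - intros j. rewrite ev_gpow by auto. apply pow_le. apply gf_bounds. }
rewrite E in H1. assert (0 < INR (S M)) by (apply lt_0_INR; lia).
apply (Rmult_le_reg_l (INR (S M))); auto. rewrite Rinv_r by lra. lra.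
Qed.

Lemma C0_kern d M k : (k <= d)%nat -> (/ INR (S M)) ^ k <= C0 d (kern M k).
Proof.
intros Hk. induction k; cbn [kern pow].
- unfold one; simpl. rewrite (proj2 (iszero_spec d zv)) by (intros; reflexivity). lra.
- eapply Rle_trans; [|apply C0_mul; [apply nonneg_gpow | apply nonneg_kern]].
  assert (0 <= / INR (S M)) by (apply Rlt_le, Rinv_0_lt_compat, lt_0_INR; lia).
  assert (0 <= (/ INR (S M)) ^ k) by (apply pow_le; auto).
  apply Rmult_le_compat; auto. apply C0_gpow; lia. apply IHk; lia.
Qed.

Lemma D_exists d (th : nat -> R) (P : list term) :
  exists D, (1 <= D)%nat /\ forall t, In t P -> isRatR (dotR d (snd t) th) ->
     exists z, INR D * dotR d (snd t) th = IZR z.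
Proof.
induction P as [|t P IH].
- exists 1%nat. split; [lia|]. intros t [].
- destruct IH as [D' [HD' H']].
  destruct (classic (isRatR (dotR d (snd t) th))) as [[q Hq]|Hn].
  + destruct q as [a b]. exists (D' * Pos.to_nat b)%nat. split.
    { pose proof (Pos2Nat.is_pos b). lia. }
    intros t' [<-|Hin] Hr.
    * exists (Z.of_nat D' * a)%Z. rewrite Hq. unfold Q2R; simpl.
      rewrite mult_INR, mult_IZR, <- INR_IZR_INZ, (IZR_pos_INR b).
      field. apply not_0_INR. pose proof (Pos2Nat.is_pos b). lia.
    * destruct (H' t' Hin Hr) as [z Hz]. exists (Z.of_nat (Pos.to_nat b) * z)%Z.
      rewrite mult_IZR, <- Hz, <- INR_IZR_INZ, mult_INR. ring.
  + exists D'. split; auto. intros t' [<-|Hin] Hr; [contradiction | auto].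
Qed.

Definition uj (th : nat -> R) (n : nat -> Z) (tau : R) (D j : nat) : nat -> R :=
  fun l => INR (S j * D) * th l - tau * IZR (n l).

Lemma dot_uj d th n tau D j h :
  dotR d h (uj th n tau D j) = INR (S j * D) * dotR d h th - tau * IZR (dotZ d h n).
Proof.
rewrite (dotR_ext d h h _ (fun l => INR (S j * D) * th l + (- tau) * IZR (n l))) by (auto; intros; unfold uj; ring).
rewrite dotR_lin, dotR_IZR. ring.
Qed.

Lemma avg_term d th n tau D (t : term) : 0 <= fst t -> (1 <= D)%nat ->
  (isRatR (dotR d (snd t) th) -> dotZ d (snd t) n = 0%Z) ->
  (isRatR (dotR d (snd t) th) -> exists z, INR D * dotR d (snd t) th = IZR z) ->
  exists B, forall N, INR N * (if iszero d (snd t) then fst t else 0) - B <=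
     sumF N (fun j => evT d (uj th n tau D j) t).
Proof.
intros Ha HD Hn Hz. unfold evT.
destruct (iszero d (snd t)) eqn:E.
- exists 0. intros N. rewrite (sumF_ext N _ (fun _ => fst t)).
  + rewrite sumF_const. lra.
  + intros j _. rewrite dotR_zero_h by (apply iszero_spec; auto). rewrite Rmult_0_r, cos_0. ring.
- set (s := dotR d (snd t) th).
  destruct (classic (isRatR s)) as [Hr|Hr].
  + destruct (Hz Hr) as [z Hzz]. pose proof (Hn Hr) as H0.
    exists 0. intros N. rewrite (sumF_ext N _ (fun _ => fst t)).
    * rewrite sumF_const. assert (0 <= INR N) by apply pos_INR. nra.
    * intros j _. rewrite dot_uj, H0. fold s.
      replace (2 * PI * (INR (S j * D) * s - tau * IZR 0)) with (0 + 2 * PI * IZR (Z.of_nat (S j) * z)).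
      { rewrite cos_2PI_Z, cos_0. ring. }
      rewrite mult_IZR, <- INR_IZR_INZ, <- Hzz, mult_INR. unfold s. ring.
  + set (g := 2 * PI * (INR D * s)).
    set (p := 2 * PI * (INR D * s) - 2 * PI * tau * IZR (dotZ d (snd t) n)).
    assert (Hs : sin (g / 2) <> 0).
    { intros H0. apply sin_eq_0_0 in H0. destruct H0 as [k Hk]. apply Hr.
      exists (Qmake k (Pos.of_nat D)). unfold Q2R; simpl.
      rewrite (IZR_pos_INR (Pos.of_nat D)), Nat2Pos.id by lia.
      assert (0 < INR D) by (apply lt_0_INR; lia). pose proof PI_RGT_0.
      unfold g in Hk. apply (Rmult_eq_reg_l (INR D * PI)); [|nra].
      replace (INR D * PI * s) with (2 * PI * (INR D * s) / 2) by field. rewrite Hk. field. lra. }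
    exists (fst t / Rabs (sin (g / 2))). intros N.
    rewrite (sumF_ext N _ (fun j => fst t * cos (INR j * g + p))).
    * rewrite sumF_scal. pose proof (sumcos_bound N g p Hs) as Hb.
      set (SS := sumF N (fun j => cos (INR j * g + p))) in *.
      assert (Hb2 : - (1 / Rabs (sin (g / 2))) <= SS) by (pose proof (Rabs_Ropp SS); pose proof (Rle_abs (- SS)); lra).
      rewrite Rmult_0_r.
      assert (0 < Rabs (sin (g/2))) by (apply Rabs_pos_lt; auto).
      assert (fst t * (- (1 / Rabs (sin (g / 2)))) <= fst t * SS)
        by (apply Rmult_le_compat_l; lra).
      replace (fst t * - (1 / Rabs (sin (g / 2)))) with (- (fst t / Rabs (sin (g / 2)))) in H0 by (field; lra).
      lra.
    * intros j _. rewrite dot_uj. fold s. unfold g, p. rewrite mult_INR, S_INR. f_equal. f_equal. ring.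
Qed.

Lemma avg d th n tau D (P : list term) : nonneg P -> (1 <= D)%nat ->
  (forall h, isRatR (dotR d h th) -> dotZ d h n = 0%Z) ->
  (forall t, In t P -> isRatR (dotR d (snd t) th) -> exists z, INR D * dotR d (snd t) th = IZR z) ->
  exists B, forall N, INR N * C0 d P - B <= sumF N (fun j => evP d (uj th n tau D j) P).
Proof.
intros HP HD Hn Hz. induction HP as [|t P Ht HP IH].
- exists 0. intros N. simpl. rewrite sumF_const. lra.
- destruct IH as [B1 HB1]; [intros; apply Hz; simpl; auto|].
  destruct (avg_term d th n tau D t Ht HD (Hn (snd t)) (Hz t (or_introl eq_refl))) as [B2 HB2].
  exists (B1 + B2). intros N. cbn [evP C0]. rewrite sumF_plus.
  specialize (HB1 N). specialize (HB2 N). nra.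
Qed.

Lemma far_gf v eps : 0 < eps <= 1/2 -> (forall m : Z, eps <= Rabs (v - IZR m)) -> gf v <= cos (PI * eps) ^ 2.
Proof.
intros He Hm. set (m0 := Int_part v). set (f := v - IZR m0).
destruct (base_Int_part v) as [B1 B2]. fold m0 in B1, B2.
assert (Hf0 : 0 <= f) by (unfold f; lra). assert (Hf1 : f < 1) by (unfold f; lra).
pose proof (Hm m0) as H1. fold f in H1. rewrite Rabs_right in H1 by lra.
pose proof (Hm (m0 + 1)%Z) as H2. rewrite plus_IZR in H2.
replace (v - (IZR m0 + 1)) with (f - 1) in H2 by (unfold f; ring).
rewrite Rabs_left in H2 by lra.
unfold gf. replace (2 * PI * v) with (2 * (PI * f) + 2 * PI * IZR m0) by (unfold f; ring).
rewrite cos_2PI_Z, cos_2a_cos.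
pose proof PI_RGT_0.
assert (Hce : 0 <= cos (PI * eps)) by (apply cos_ge_0; nra).
destruct (Rle_dec f (1/2)).
- assert (0 <= cos (PI * f)) by (apply cos_ge_0; nra).
  assert (cos (PI * f) <= cos (PI * eps)) by (apply cos_decr_1; nra).
  simpl. nra.
- replace (PI * f) with (PI - PI * (1 - f)) by ring. rewrite Rtrigo_facts.cos_pi_minus.
  assert (0 <= cos (PI * (1 - f))) by (apply cos_ge_0; nra).
  assert (cos (PI * (1 - f)) <= cos (PI * eps)) by (apply cos_decr_1; nra).
  simpl. nra.
Qed.

Lemma bern2 delta M : 0 <= delta ->
  1 + INR M * delta + INR M * (INR M - 1) / 2 * delta ^ 2 <= (1 + delta) ^ M.
Proof.
intros Hd. induction M.
- simpl. lra.
- rewrite S_INR. simpl pow. simpl pow in IHM.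
  assert (0 <= INR M) by apply pos_INR.
  assert (0 <= INR M * (INR M - 1)).
  { destruct M; [simpl; lra|]. rewrite S_INR. assert (0 <= INR M) by apply pos_INR. nra. }
  assert (0 <= INR M * (INR M - 1) / 2 * (delta * (delta * 1)) * delta) by (apply Rmult_le_pos; [apply Rmult_le_pos; [lra|nra]|lra]).
  nra.
Qed.

Lemma pow_le1 x M : 0 <= x <= 1 -> x ^ M <= 1.
Proof. intros H. rewrite <- (pow1 M). apply pow_incr. lra. Qed.

Lemma lin_exp s : 0 <= s < 1 -> exists M0, forall M, (M0 <= M)%nat -> INR (S M) * s ^ M <= 1.
Proof.
intros Hs. destruct (Req_dec s 0) as [E|E].
- subst. exists 1%nat. intros M HM. rewrite pow_i by lia. lra.
- set (delta := / s - 1).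
  assert (Hd : 0 < delta) by (unfold delta; assert (1 < / s) by (rewrite <- Rinv_1; apply Rinv_lt_contravar; lra); lra).
  destruct (INR_archimed (delta ^ 2) 2) as [k Hk]; [simpl; nra|].
  exists (S k). intros M HM.
  pose proof (bern2 delta M (Rlt_le _ _ Hd)) as Hb.
  assert (HMk : INR k <= INR M - 1) by (assert (INR (S k) <= INR M) by (apply le_INR; lia); rewrite S_INR in *; lra).
  assert (0 <= INR M) by apply pos_INR.
  assert (INR (S M) <= (1 + delta) ^ M).
  { rewrite S_INR. assert (0 <= delta ^ 2) by (apply pow_le; lra).
    assert (H3 : (INR M - 1) * delta ^ 2 >= 2) by nra.
    assert (INR M * ((INR M - 1) * delta ^ 2) >= INR M * 2) by (apply Rle_ge, Rmult_le_compat_l; lra).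
    assert (INR M * (INR M - 1) / 2 * delta ^ 2 >= INR M) by lra.
    assert (INR M * delta >= 0) by nra. lra. }
  assert (E2 : s * (1 + delta) = 1) by (unfold delta; field; auto).
  assert (s ^ M * (1 + delta) ^ M = 1) by (rewrite <- Rpow_mult_distr, E2; apply pow1).
  assert (0 <= s ^ M) by (apply pow_le; lra). nra.
Qed.

Lemma poly_exp k : forall s, 0 <= s < 1 -> exists M0, forall M, (M0 <= M)%nat -> INR (S M) ^ k * s ^ M <= 1.
Proof.
induction k; intros s Hs.
- exists O. intros M _. simpl. rewrite Rmult_1_l. apply pow_le1. lra.
- set (r := sqrt s).
  assert (Hr : 0 <= r < 1).
  { split; [apply sqrt_pos|]. rewrite <- sqrt_1. apply sqrt_lt_1; lra. }
  assert (Hrr : r * r = s) by (apply sqrt_sqrt; lra).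
  destruct (IHk r Hr) as [M1 H1]. destruct (lin_exp r Hr) as [M2 H2].
  exists (Nat.max M1 M2). intros M HM.
  specialize (H1 M ltac:(lia)). specialize (H2 M ltac:(lia)).
  replace (INR (S M) ^ S k * s ^ M) with ((INR (S M) ^ k * r ^ M) * (INR (S M) * r ^ M)).
  2:{ rewrite <- Hrr, Rpow_mult_distr. simpl. ring. }
  assert (0 <= INR (S M) ^ k * r ^ M) by (apply Rmult_le_pos; apply pow_le; [apply pos_INR | lra]).
  assert (0 <= INR (S M) * r ^ M) by (apply Rmult_le_pos; [apply pos_INR | apply pow_le; lra]).
  nra.
Qed.

Lemma pow_strict a b M : 0 <= a < b -> a ^ S M < b ^ S M.
Proof.
intros H. induction M.
- simpl. lra.
- change (a ^ S (S M)) with (a * a ^ S M). change (b ^ S (S M)) with (b * b ^ S M).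
  assert (0 <= a ^ S M) by (apply pow_le; lra). nra.
Qed.

Theorem approx d (th : nat -> R) (n : nat -> Z)
  (Nn : forall h, isRatR (dotR d h th) -> dotZ d h n = 0%Z) :
  forall tau eps, eps > 0 -> exists n0 : nat, (1 <= n0)%nat /\
    forall i, (i < d)%nat -> exists m : Z, Rabs (INR n0 * th i - IZR (n i) * tau - IZR m) < eps.
Proof.
intros tau eps He. apply NNPP; intro Hno.
assert (Hfar : forall n0, (1 <= n0)%nat -> exists i, (i < d)%nat /\
          forall m : Z, eps <= Rabs (INR n0 * th i - IZR (n i) * tau - IZR m)).
{ intros n0 H1. apply NNPP; intro Hc. apply Hno. exists n0. split; auto.
  intros i Hi. apply NNPP; intro Hm. apply Hc. exists i. split; auto.
  intros m. apply Rnot_lt_le. intro Hlt. apply Hm. exists m; auto. }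
set (e := Rmin eps (1/2)).
assert (He1 : 0 < e <= 1/2) by (unfold e; split; [apply Rmin_glb_lt; lra | apply Rmin_r]).
assert (He2 : e <= eps) by apply Rmin_l.
set (rho := cos (PI * e) ^ 2).
pose proof PI_RGT_0.
assert (Hrho : 0 <= rho < 1).
{ unfold rho. split; [apply pow2_ge_0|].
  assert (0 < sin (PI * e)) by (apply sin_gt_0; nra).
  pose proof (sin2_cos2 (PI * e)). unfold Rsqr in H1. simpl. nra. }
set (rho' := (1 + rho) / 2).
destruct (poly_exp d rho' ltac:(unfold rho'; lra)) as [M0 HM0].
set (M := Nat.max M0 1).
specialize (HM0 M ltac:(unfold M; lia)).
assert (Hlt : rho ^ M < rho' ^ M).
{ destruct M as [|M'] eqn:EM; [unfold M in EM; lia|]. apply pow_strict. unfold rho'; lra. }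
assert (HQ : 0 < INR (S M)) by (apply lt_0_INR; lia).
assert (HQd : 0 < INR (S M) ^ d) by (apply pow_lt; auto).
set (K := kern M d).
assert (Hc0 : rho ^ M < C0 d K).
{ eapply Rlt_le_trans; [|apply C0_kern; lia].
  rewrite pow_inv. apply (Rmult_lt_reg_r (INR (S M) ^ d)); auto.
  rewrite Rinv_l by lra. assert (0 <= rho' ^ M) by (apply pow_le; unfold rho'; lra). nra. }
destruct (D_exists d th K) as [D [HD HDp]].
destruct (avg d th n tau D K (nonneg_kern M d) HD Nn HDp) as [B HB].
assert (Hup : forall N, sumF N (fun j => evP d (uj th n tau D j) K) <= INR N * rho ^ M).
{ intros N. rewrite <- sumF_const. apply sumF_le. intros j _.
  unfold K. rewrite ev_kern by lia.
  destruct (Hfar (S j * D)%nat ltac:(lia)) as [i [Hi Hm]].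
  apply (prodK_far M d _ i rho Hi ltac:(lra)).
  apply Rle_trans with (cos (PI * e) ^ 2); [|unfold rho; lra].
  apply far_gf; auto. intros m. eapply Rle_trans; [apply He2|].
  unfold uj. replace (INR (S j * D) * th i - tau * IZR (n i) - IZR m)
    with (INR (S j * D) * th i - IZR (n i) * tau - IZR m) by ring. apply Hm. }
destruct (INR_archimed (C0 d K - rho ^ M) B ltac:(lra)) as [N HN].
specialize (HB N). specialize (Hup N). nra.
Qed.
From mathcomp Require ssreflect ssrfun ssrbool eqtype ssrnat seq fintype bigop ssralg ssrnum ssrint rat matrix mxalgebra Rstruct ssrZ.
Module MC.
Import ssreflect ssrfun ssrbool eqtype ssrnat seq fintype bigop ssralg ssrnum ssrint rat matrix mxalgebra Rstruct ssrZ.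
Import GRing.Theory Num.Theory.
Local Open Scope ring_scope.
Local Set Implicit Arguments. Local Unset Strict Implicit.

Section Ker.
Variable d : nat.
Variable P : 'rV[rat]_d -> Prop.
Hypothesis PD : forall a b, P a -> P b -> P (a + b).
Hypothesis PZ : forall (k : rat) a, P a -> P (k *: a).

Definition spanP {k} (A : 'M[rat]_(k, d)) := forall w : 'rV_k, P (w *m A).

Definition Qr (r : nat) := exists k (A : 'M[rat]_(k, d)), spanP A /\ mxrank A = r.

Lemma Qr_bound r : Qr r -> (r <= d)%N.
Proof. case=> k [A [_ rA]]; rewrite -rA; exact: rank_leq_col. Qed.

Lemma spanP_col k (A : 'M[rat]_(k, d)) h : spanP A -> P h -> spanP (col_mx A h).
Proof.
move=> sA Ph w; rewrite -[w]hsubmxK mul_row_col.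
apply: PD; first exact: sA.
by rewrite [rsubmx w]mx11_scalar mul_scalar_mx; apply: PZ.
Qed.

Lemma exists_max (P0 : P 0) : exists k (A : 'M[rat]_(k,d)), spanP A /\ forall h, P h -> (h <= A)%MS.
Proof.
have Q0 : Qr 0.
  exists 0%N, 0; split; last by rewrite mxrank0.
  by move=> w; rewrite mulmx0.
have [r [Qrr rmax]] : exists r, Qr r /\ forall r', Qr r' -> (r' <= r)%N.
  apply: NNPP => nex.
  have H : forall m, exists r, Qr r /\ (m <= r)%N.
    elim=> [|m [r [Qrr mr]]]; first by exists 0%N.
    apply: NNPP => nex2; apply: nex; exists r; split => // r' Qr'.
    apply: NNPP => /negP; rewrite -ltnNge => rr'.
    apply: nex2; exists r'; split => //; exact: leq_ltn_trans mr rr'.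
  have [r [Qrr dr]] := H d.+1.
  by have := Qr_bound Qrr; rewrite leqNgt dr.
case: Qrr => k [A [sA rA]].
exists k, A; split => // h Ph.
apply: NNPP => /negP nh.
have sB := spanP_col sA Ph.
have : (A < col_mx A h)%MS.
  have:= submx_refl (col_mx A h); rewrite col_mx_sub => /andP [sAB sHB].
  rewrite ltmxE sAB /=; apply/negP => sBA.
  by rewrite (submx_trans sHB sBA) in nh.
rewrite ltmxErank => /andP [_ lt].
have := rmax _ (ex_intro _ _ (ex_intro _ _ (conj sB erefl))).
by rewrite leqNgt -rA lt.
Qed.

Lemma ker_sep (P0 : P 0) (c : 'rV[rat]_d) : ~ P c ->
  exists v : 'I_d -> rat, (forall h, P h -> \sum_i h ord0 i * v i = 0) /\ \sum_i c ord0 i * v i != 0.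
Proof.
move=> nPc.
have [k [A [sA allA]]] := exists_max P0.
have nc : ~~ (c <= A)%MS.
  apply/negP => /submxP [w cE]; apply: nPc; rewrite cE; exact: sA.
move: nc; rewrite submxE => nz.
have [j jnz] : exists j, (c *m cokermx A) ord0 j != 0.
  apply: NNPP => nex; move/negP: nz; apply; apply/eqP/matrixP => i j.
  rewrite (ord1 i) [RHS]mxE; apply: NNPP => hn; apply: nex; exists j.
  by apply/eqP.
exists (fun i => cokermx A i j); split.
  move=> h Ph; have := allA h Ph; case/submxP => w ->.
  have : ((w *m A) *m cokermx A) ord0 j = 0 by rewrite -mulmxA mulmx_coker mulmx0 mxE.
  by rewrite mxE.
by move: jnz; rewrite mxE.
Qed.
End Ker.

Lemma IZR_intr_pos (p : positive) : IZR (Z.pos p) = (int_of_Z (Z.pos p))%:~R :> R.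
Proof. by rewrite /= -positive_nat_Z -INR_IZR_INZ INRE pmulrn. Qed.
Lemma IZR_intr (z : Z) : IZR z = (int_of_Z z)%:~R :> R.
Proof.
case: z => [|p|p]; [by [] | exact: IZR_intr_pos | ].
have e : int_of_Z (Z.neg p) = - int_of_Z (Z.pos p).
  rewrite /= NegzE; have := Pos2Nat.is_pos p.
  case: (Pos.to_nat p) => [|m] //; lia.
rewrite e mulrNz -IZR_intr_pos -Pos2Z.opp_pos opp_IZR.
by [].
Qed.

Lemma IZR_Zofint (z : int) : IZR (Z_of_int z) = z%:~R :> R.
Proof. by rewrite IZR_intr Z_of_intK. Qed.

Lemma ratr_Q (r : rat) : exists q : Q, ratr r = Q2R q.
Proof.
have [m dm] := denqP r.
exists (Qmake (Z_of_int (numq r)) (Pos.of_succ_nat m)).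
rewrite /Q2R /= /ratr.
have -> : Z.pos (Pos.of_succ_nat m) = Z_of_int (denq r) by rewrite dm /= Zpos_P_of_succ_nat; lia.
by rewrite !IZR_Zofint.
Qed.

Lemma big_dotR (d : nat) (h : nat -> Z) (x : nat -> R) :
  \sum_(i < d) IZR (h i) * x i = dotR d h x.
Proof.
elim: d => [|d IH]; first by rewrite big_ord0.
by rewrite big_ord_recr /= IH.
Qed.

Lemma big_dotZ (d : nat) (h n : nat -> Z) :
  \sum_(i < d) h i * n i = dotZ d h n.
Proof.
elim: d => [|d IH]; first by rewrite big_ord0.
by rewrite big_ord_recr /= IH.
Qed.

Lemma sep_Z (d : nat) (th : nat -> R) (c : nat -> Z) :
  ~ isRatR (dotR d c th) ->
  exists n : nat -> Z, (forall h, isRatR (dotR d h th) -> dotZ d h n = Z0) /\ dotZ d c n <> Z0.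
Proof.
case: d => [|d'] nc; first by case: nc; exact: isRat_0.
pose P (r : 'rV[rat]_d'.+1) := isRatR (\sum_(i < d'.+1) ratr (r ord0 i) * th i).
have PD : forall a b, P a -> P b -> P (a + b).
  move=> a b; rewrite /P => Pa Pb.
  under eq_bigr => i _ do rewrite mxE rmorphD mulrDl.
  rewrite big_split; exact: isRat_plus.
have PZ : forall k a, P a -> P (k *: a).
  move=> k a Pa; rewrite /P.
  under eq_bigr => i _ do rewrite mxE rmorphM -mulrA.
  rewrite -mulr_sumr; apply: isRat_mult; last done.
  have [q qe] := ratr_Q k; exists q; exact: qe.
have P0 : P 0.
  rewrite /P; under eq_bigr => i _ do rewrite mxE rmorph0 mul0r.
  rewrite big1_eq; exact: isRat_0.
pose row_of (h : nat -> Z) : 'rV[rat]_d'.+1 := \row_i ((int_of_Z (h (nat_of_ord i)))%:~R).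
have Prow : forall h, P (row_of h) <-> isRatR (dotR d'.+1 h th).
  move=> h; rewrite /P -big_dotR.
  have -> : \sum_(i < d'.+1) ratr (row_of h ord0 i) * th i = \sum_(i < d'.+1) IZR (h i) * th i.
    by apply: eq_bigr => i _; rewrite mxE ratr_int IZR_intr.
  by [].
have nPc : ~ P (row_of c) by move/Prow.
have [v [vker vc]] := ker_sep PD PZ P0 nPc.
pose k : int := \prod_(i < d'.+1) denq (v i).
pose w (i : 'I_d'.+1) : int := numq (v i) * \prod_(j < d'.+1 | j != i) denq (v j).
have wE : forall i, (w i)%:~R = k%:~R * v i :> rat.
  move=> i; rewrite /w /k [in RHS](bigD1 i) //= !intrM numqE.
  by rewrite [RHS]mulrC mulrA.
have k0 : k != 0.
  rewrite /k; apply/prodf_neq0 => i _; exact: denq_neq0.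
pose nf := fun i => if (i < d'.+1)%N then Z_of_int (w (inord i)) else Z0.
have key : forall h, dotZ d'.+1 h nf = Z_of_int (\sum_(i < d'.+1) int_of_Z (h i) * w i) /\
   ((\sum_(i < d'.+1) int_of_Z (h i) * w i)%:~R : rat) = k%:~R * \sum_i (row_of h) ord0 i * v i.
  move=> h; split.
    rewrite -big_dotZ rmorph_sum; apply: eq_bigr => i _.
    by rewrite /nf ltn_ord inord_val rmorphM /= int_of_ZK.
  rewrite mulrz_sumr mulr_sumr; apply: eq_bigr => i _.
  by rewrite intrM (wE i) mxE mulrCA.
exists nf; split.
  move=> h hr; have Ph : P (row_of h) by apply/Prow.
  have [e1 e2] := key h; rewrite e1.
  have -> : \sum_(i < d'.+1) int_of_Z (h i) * w i = 0.
    by apply/eqP; rewrite -(intr_eq0 rat) e2 (vker _ Ph) mulr0.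
  by [].
have [e1 e2] := key c; rewrite e1 => H.
have z0 : \sum_(i < d'.+1) int_of_Z (c i) * w i = 0.
  by rewrite -[LHS]Z_of_intK H.
move: e2; rewrite z0 mulr0z => /esym /eqP; rewrite mulf_eq0 (negbTE vc) orbF intr_eq0.
by rewrite (negbTE k0).
Qed.

End MC.

Definition NN d th (n : nat -> Z) := forall h, isRatR (dotR d h th) -> dotZ d h n = 0%Z.

Lemma dotZ_lin d h u v a b : dotZ d h (fun l => (a * u l + b * v l)%Z) = (a * dotZ d h u + b * dotZ d h v)%Z.
Proof. induction d; simpl; [lia | rewrite IHd; ring]. Qed.

Lemma NN_lin d th u v a b : NN d th u -> NN d th v -> NN d th (fun l => (a * u l + b * v l)%Z).
Proof. intros Hu Hv h Hh. rewrite dotZ_lin, Hu, Hv by auto. ring. Qed.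

Lemma NN_zero d th : NN d th (fun _ => 0%Z).
Proof. intros h _. induction d; simpl; [auto | rewrite IHd; ring]. Qed.

Lemma fold_le (f : (nat -> Z) -> Z) (l : list (nat -> Z)) c (Hf : forall x, (0 <= f x)%Z) : True -> In c l ->
  (f c <= fold_right (fun x acc => f x + acc) 0 l)%Z.
Proof.
assert (Hnn : forall l0 : list (nat -> Z), (0 <= fold_right (fun x acc => f x + acc) 0 l0)%Z).
{ intros l0; induction l0 as [|a l0 IH0]; simpl; [lia|]. pose proof (Hf a). lia. }
intros Hf' Hc. induction l as [|x l IH]; [destruct Hc|]. simpl.
destruct Hc as [<-|Hc].
- pose proof (Hnn l). pose proof (Hf x). lia.
- pose proof (IH Hc). pose proof (Hf x). lia.
Qed.

Lemma Zkey A B lam : (Z.abs A < lam)%Z -> (A <> 0 \/ B <> 0)%Z -> (A + lam * B <> 0)%Z.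
Proof.
intros H1 H2 H3. destruct (Z.eq_dec B 0) as [E|E].
- subst. destruct H2; lia.
- assert (Z.abs (lam * B) >= lam)%Z by (rewrite Z.abs_mul; nia). lia.
Qed.

Lemma avoid d th
  (sep : forall c, ~ isRatR (dotR d c th) -> exists n, NN d th n /\ dotZ d c n <> 0%Z) :
  forall cs : list (nat -> Z), (forall c, In c cs -> ~ isRatR (dotR d c th)) ->
  exists n, NN d th n /\ forall c, In c cs -> dotZ d c n <> 0%Z.
Proof.
induction cs as [|c0 cs IH]; intros Hcs.
- exists (fun _ => 0%Z). split; [apply NN_zero|]. intros c [].
- destruct IH as [u [Nu Hu]]; [intros; apply Hcs; right; auto|].
  destruct (sep c0 (Hcs c0 (or_introl eq_refl))) as [m [Nm Hm]].
  set (lam := (1 + fold_right (fun c acc => Z.abs (dotZ d c u) + acc) 0 (c0 :: cs))%Z).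
  exists (fun l => (1 * u l + lam * m l)%Z). split; [apply NN_lin; auto|].
  intros c Hc. rewrite dotZ_lin.
  assert (Hb : (Z.abs (dotZ d c u) < lam)%Z).
  { unfold lam. pose proof (fold_le (fun c => Z.abs (dotZ d c u)) (c0 :: cs) c ltac:(intros; lia) I Hc). lia. }
  rewrite Z.mul_1_l. apply Zkey; auto.
  destruct Hc as [<-|Hc]; [right; auto | left; apply Hu; auto].
Qed.

Definition tp (i j : nat) (a b : Z) : nat -> Z := fun l => (a * ev i l + b * ev j l)%Z.

Lemma dotR_scal d a h x : dotR d (fun l => (a * h l)%Z) x = IZR a * dotR d h x.
Proof. induction d; simpl; [ring | rewrite IHd, mult_IZR; ring]. Qed.

Lemma dotR_tp d i j a b x : (i < d)%nat -> (j < d)%nat -> dotR d (tp i j a b) x = IZR a * x i + IZR b * x j.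
Proof. intros Hi Hj. unfold tp. rewrite dotR_addv, !dotR_scal, !dotR_ev by auto. ring. Qed.

Lemma dotZ_tp d i j a b n : (i < d)%nat -> (j < d)%nat -> dotZ d (tp i j a b) n = (a * n i + b * n j)%Z.
Proof.
intros Hi Hj. apply eq_IZR. rewrite <- dotR_IZR, dotR_tp by auto. rewrite plus_IZR, !mult_IZR. ring.
Qed.

Lemma dotZ_ev d i n : (i < d)%nat -> dotZ d (ev i) n = n i.
Proof. intros Hi. apply eq_IZR. rewrite <- dotR_IZR, dotR_ev by auto. reflexivity. Qed.

Lemma irr2 (th : nat -> R) i j a b : Q_lin_indep3 1 (th i) (th j) -> (a <> 0 \/ b <> 0)%Z ->
  ~ isRatR (IZR a * th i + IZR b * th j).
Proof.
intros Hind Hab [q Hq].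
destruct (Hind (- q)%Q (inject_Z a) (inject_Z b)) as [_ [Ha Hb]].
- rewrite Q2R_opp. unfold Q2R at 2 3. simpl. rewrite <- Hq. field.
- unfold Qeq in Ha, Hb. simpl in Ha, Hb. lia.
Qed.

Fixpoint sumZ (d : nat) (f : nat -> Z) : Z :=
  match d with O => 0%Z | S d' => (sumZ d' f + f d')%Z end.
Lemma sumZ_le d f i : (forall l, (0 <= f l)%Z) -> (i < d)%nat -> (f i <= sumZ d f)%Z.
Proof.
intros Hf Hi. induction d; [lia|]. simpl.
assert (0 <= sumZ d f)%Z by (clear IHd Hi; induction d; simpl; [lia|]; pose proof (Hf d); lia).
destruct (Nat.eq_dec i d); [subst; lia|]. pose proof (IHd ltac:(lia)). pose proof (Hf d). lia.
Qed.

Lemma choose_n d (th : nat -> R) i1 :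
  (2 <= d)%nat -> (i1 < d)%nat ->
  (forall i j, (i < d)%nat -> (j < d)%nat -> i <> j -> Q_lin_indep3 1 (th i) (th j)) ->
  exists n : nat -> Z, NN d th n /\
    (forall i j, (i < d)%nat -> (j < d)%nat -> i <> j -> n i <> n j) /\
    (forall i, (i < d)%nat -> n i <> 0%Z) /\
    (forall i, (i < d)%nat -> i <> i1 -> ~ Z.divide (n i1) (n i)).
Proof.
intros Hd Hi1 Hind.
assert (sep : forall c, ~ isRatR (dotR d c th) -> exists n, NN d th n /\ dotZ d c n <> 0%Z)
  by (intros c Hc; apply MC.sep_Z; auto).
assert (Hev : forall i, (i < d)%nat -> ~ isRatR (dotR d (ev i) th)).
{ intros i Hi. set (j := if Nat.eqb i 0 then 1%nat else 0%nat).
  assert (Hj : (j < d)%nat /\ i <> j) by (unfold j; destruct (Nat.eqb i 0) eqn:E;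
     [apply Nat.eqb_eq in E | apply Nat.eqb_neq in E]; lia).
  rewrite dotR_ev by auto. replace (th i) with (IZR 1 * th i + IZR 0 * th j) by ring.
  apply irr2; [apply Hind; tauto | lia]. }
set (C1 := map ev (seq 0 d) ++
           flat_map (fun i => map (fun j => tp i j 1 (-1)) (filter (fun j => negb (Nat.eqb i j)) (seq 0 d))) (seq 0 d)).
destruct (avoid d th sep C1) as [u [Nu Hu]].
{ intros c Hc. unfold C1 in Hc. apply in_app_iff in Hc. destruct Hc as [Hc|Hc].
  - apply in_map_iff in Hc. destruct Hc as [i [<- Hi]]. apply in_seq in Hi. apply Hev. lia.
  - apply in_flat_map in Hc. destruct Hc as [i [Hi Hc]]. apply in_map_iff in Hc.
    destruct Hc as [j [<- Hj]]. apply filter_In in Hj. destruct Hj as [Hj Hij].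
    apply in_seq in Hi, Hj. apply negb_true_iff, Nat.eqb_neq in Hij.
    rewrite dotR_tp by lia. apply irr2; [apply Hind; lia | lia]. }
assert (Hu0 : forall i, (i < d)%nat -> u i <> 0%Z).
{ intros i Hi. rewrite <- dotZ_ev with (d := d) by auto. apply Hu. unfold C1. apply in_app_iff. left.
  apply in_map. apply in_seq. lia. }
assert (Hu1 : forall i j, (i < d)%nat -> (j < d)%nat -> i <> j -> u i <> u j).
{ intros i j Hi Hj Hij E. assert (dotZ d (tp i j 1 (-1)) u = 0%Z) by (rewrite dotZ_tp by auto; lia).
  revert H. apply Hu. unfold C1. apply in_app_iff. right. apply in_flat_map. exists i. split; [apply in_seq; lia|].
  apply in_map_iff. exists j. split; auto. apply filter_In. split; [apply in_seq; lia|].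
  apply negb_true_iff, Nat.eqb_neq. auto. }
set (wv := fun i => if Nat.eqb i i1 then ev i1 else tp i i1 (u i1) (- u i)).
destruct (avoid d th sep (map wv (seq 0 d))) as [v [Nv Hv]].
{ intros c Hc. apply in_map_iff in Hc. destruct Hc as [i [<- Hi]]. apply in_seq in Hi. unfold wv.
  destruct (Nat.eqb i i1) eqn:E; [apply Hev; auto|]. apply Nat.eqb_neq in E.
  rewrite dotR_tp by lia. apply irr2; [apply Hind; lia|]. left. apply Hu0. auto. }
set (K := fun i => (u i1 * v i - u i * v i1)%Z).
assert (HK : forall i, (i < d)%nat -> i <> i1 -> K i <> 0%Z).
{ intros i Hi Hii. unfold K. replace (u i1 * v i - u i * v i1)%Z with (dotZ d (wv i) v).
  - apply Hv. apply in_map. apply in_seq. lia.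
  - unfold wv. rewrite (proj2 (Nat.eqb_neq i i1)) by auto. rewrite dotZ_tp by auto. ring. }
set (S := sumZ d (fun l => Z.abs (v l) + Z.abs (K l))%Z).
set (N0 := (1 + 2 * S)%Z).
assert (HS : forall i, (i < d)%nat -> (Z.abs (v i) + Z.abs (K i) <= S)%Z)
  by (intros i Hi; apply (sumZ_le d (fun l => Z.abs (v l) + Z.abs (K l))%Z); auto; intros; lia).
assert (HS0 : (0 <= S)%Z) by (pose proof (HS i1 Hi1); lia).
exists (fun l => (N0 * u l + 1 * v l)%Z).
split; [apply NN_lin; auto|]. split; [|split].
- intros i j Hi Hj Hij E. pose proof (Hu1 i j Hi Hj Hij). pose proof (HS i Hi). pose proof (HS j Hj).
  assert (E2 : (N0 * (u i - u j) = v j - v i)%Z) by lia.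
  assert (Z.abs (N0 * (u i - u j)) >= N0)%Z by (rewrite Z.abs_mul; unfold N0 in *; nia).
  rewrite E2 in H2. unfold N0 in H2. lia.
- intros i Hi E. pose proof (Hu0 i Hi). pose proof (HS i Hi).
  assert (E2 : (N0 * u i = - v i)%Z) by lia.
  assert (Z.abs (N0 * u i) >= N0)%Z by (rewrite Z.abs_mul; unfold N0 in *; nia).
  rewrite E2 in H1. unfold N0 in H1. lia.
- intros i Hi Hii [c Hc]. pose proof (HK i Hi Hii). pose proof (HS i Hi). pose proof (HS i1 Hi1).
  pose proof (Hu0 i1 Hi1).
  set (n1 := (N0 * u i1 + 1 * v i1)%Z) in *.
  assert (Hn1 : (Z.abs n1 > Z.abs (K i))%Z).
  { assert (Z.abs (N0 * u i1) >= N0)%Z by (rewrite Z.abs_mul; unfold N0 in *; nia).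
    unfold n1. unfold N0 in *. lia. }
  assert (E : ((u i1 * c - u i) * n1 = K i)%Z).
  { unfold K. transitivity (u i1 * (N0 * u i + 1 * v i) - u i * n1)%Z.
    - rewrite Hc. ring.
    - unfold n1. ring. }
  destruct (Z.eq_dec (u i1 * c - u i) 0) as [E0|E0].
  + rewrite E0 in E. lia.
  + assert (Z.abs ((u i1 * c - u i) * n1) >= Z.abs n1)%Z by (rewrite Z.abs_mul; nia).
    rewrite E in H3. lia.
Qed.

Theorem lemma3p2
  (M k d : nat) (a : nat -> nat -> R) (theta : nat -> nat -> R) (p : nat)
  (hM : level_ok M) (hk : (0 < k)%nat) (hd : (2 <= d)%nat)
  (hnorm : forall i : nat, (i < d)%nat -> a i 1%nat = 1)
  (htheta : satake_angles M k d a theta)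
  (hp : nat_prime p) (hpM : ~ Nat.divide p M)
  (hind : forall i j : nat, (i < d)%nat -> (j < d)%nat -> i <> j ->
            Q_lin_indep3 1 (theta i p) (theta j p)) :
  forall i1 : nat, (i1 < d)%nat ->
  exists n : nat -> Z,
    (forall i j : nat, (i < d)%nat -> (j < d)%nat -> i <> j -> n i <> n j) /\
    (forall i : nat, (i < d)%nat -> n i <> 0%Z) /\
    (forall i : nat, (i < d)%nat -> i <> i1 -> ~ Z.divide (n i1) (n i)) /\
    (forall t eps : R, eps > 0 ->
       exists n0 : nat, (1 <= n0)%nat /\
         forall i : nat, (i < d)%nat ->
           exists m : Z, Rabs (INR n0 * theta i p - IZR (n i) * t - IZR m) < eps).
Proof.
intros i1 Hi1.
destruct (choose_n d (fun l => theta l p) i1 hd Hi1 hind) as [n [Nn [H1 [H2 H3]]]].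
exists n. split; [exact H1|]. split; [exact H2|]. split; [exact H3|].
intros t eps He. exact (approx d (fun l => theta l p) n Nn t eps He).
Qed.
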